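(* Let $U=U_kV_k\cdots U_1V_1U_0$ be a product of unitaries alternating between incoherent unitaries $U_i$ and (generalised controlled) Hadamards $V_i$. Then for any state $|\psi\rangle$ the coherence rank satisfies $\dfrac{\chi(|\psi\rangle)}{2^k}\le \chi(U|\psi\rangle)\le 2^k\chi(|\psi\rangle)$.
   Context: The coherence rank $\chi(|\psi\rangle)$ of a pure state is the minimum number of terms needed to write it as a linear combination of computational basis states. A unitary is incoherent if it has the form $\sum_x e^{i\theta_x}|\pi(x)\rangle\langle x|$ for real $\theta_x$ and a permutation $\pi$. A generalised controlled Hadamard is $\sum_{x\in S}|x\rangle\langle x|\otimes H+\sum_{y\in S^c}|y\rangle\langle y|\otimes I$ for a subset $S$ of bitstrings (this includes a plain Hadamard on one qubit). *)

(* Defs.v *)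
From HB Require Import structures.
From mathcomp Require Import all_boot all_order all_algebra.
From mathcomp Require Import fingroup perm complex.
From mathcomp Require Import reals.
Set Implicit Arguments. Unset Strict Implicit. Unset Printing Implicit Defensive.
Import Order.TTheory GRing.Theory Num.Theory.
Local Open Scope ring_scope.

Section Qubits.
Variables (R : realType) (n : nat).

Definition bits := {ffun 'I_n -> bool}.

Definition state := bits -> R[i].
Definition operator := bits -> bits -> R[i].

Definition apply_op (A : operator) (psi : state) : state :=
  fun x => \sum_(y : bits) A x y * psi y.

Definition normalized (psi : state) : Prop :=
  \sum_(x : bits) `|psi x| ^+ 2 = 1.

(* coherence rank: minimal number of computational basis states whose linear
   span contains psi *)
Definition rank_pred (psi : state) : pred nat := fun k =>
  [exists A : {set bits},
     (#|A| == k) && [forall x : bits, (x \notin A) ==> (psi x == 0)]].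

Lemma rank_pred_ex (psi : state) : exists k, rank_pred psi k.
Proof.
exists #|[set: bits]|; apply/existsP; exists [set: bits].
by rewrite eqxx /=; apply/forallP => x; rewrite in_setT.
Qed.

Definition coherence_rank (psi : state) : nat := ex_minn (rank_pred_ex psi).

(* incoherent unitary: sum_x e^{i theta_x} |pi(x)><x| ; the phases e^{i theta}
   with theta real are exactly the complex numbers of modulus one *)
Definition incoherent (A : operator) : Prop :=
  exists (p : {perm bits}) (ph : bits -> R[i]),
    (forall x, `|ph x| = 1) /\
    (forall x y, A x y = if x == p y then ph y else 0).

Definition hadamard (a b : bool) : R[i] :=
  (if a && b then -1 else 1) / sqrtC 2.

Definition clear_bit (t : 'I_n) (x : bits) : bits :=
  [ffun i => if i == t then false else x i].

(* generalised controlled Hadamard with target qubit t and control set S of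
   bitstrings of the other qubits (encoded with bit t equal to false):
   sum_{c in S} |c><c| (x) H_t + sum_{c notin S} |c><c| (x) I_t *)
Definition gch_op (t : 'I_n) (S : {set bits}) : operator := fun x y =>
  if clear_bit t x == clear_bit t y then
    (if clear_bit t y \in S then hadamard (x t) (y t)
     else (if x t == y t then 1 else 0))
  else 0.

Definition gen_controlled_hadamard (A : operator) : Prop :=
  exists (t : 'I_n) (S : {set bits}), forall x y, A x y = gch_op t S x y.

Fixpoint circuit (U V : nat -> operator) (k : nat) (psi : state) : state :=
  match k with
  | 0 => apply_op (U 0%N) psi
  | k'.+1 => apply_op (U k) (apply_op (V k) (circuit U V k' psi))
  end.

End Qubits.

(* Main.v *)
Require Import Defs.
From HB Require Import structures.
From mathcomp Require Import all_boot all_order all_algebra.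
From mathcomp Require Import fingroup perm complex.
From mathcomp Require Import reals.
Import Order.TTheory GRing.Theory Num.Theory.
Local Open Scope ring_scope.

Section Aux.
Variables (R : realType) (n : nat).

Definition supp (psi : state R n) : {set bits n} := [set x | psi x != 0].

Lemma supp_rank (psi : state R n) : coherence_rank psi = #|supp psi|.
Proof.
rewrite /coherence_rank; case: ex_minnP => m /existsP [A /andP [/eqP <- /forallP HA]] Hmin.
apply/eqP; rewrite eqn_leq; apply/andP; split.
- apply: Hmin; apply/existsP; exists (supp psi); rewrite eqxx /=.
  by apply/forallP => x; apply/implyP; rewrite inE negbK.
- apply: subset_leq_card; apply/subsetP => x; rewrite inE => nz.
  apply/negPn/negP => xA; move: (HA x); by rewrite xA /= (negbTE nz).
Qed.

Lemma incoh_supp (A : operator R n) psi :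
  incoherent A -> #|supp (apply_op A psi)| = #|supp psi|.
Proof.
case=> p [ph [Hph HA]].
set q := (p^-1)%g.
have E x : apply_op A psi x = ph (q x) * psi (q x).
  rewrite /apply_op (bigD1 (q x)) //= HA permKV eqxx big1 ?addr0 // => y Hy.
  rewrite HA; case: eqP => [Exy|]; last by rewrite mul0r.
  by move: Hy; rewrite Exy /q permK eqxx.
have phnz y : ph y != 0.
  apply/eqP => h; move: (Hph y); rewrite h normr0 => /eqP; by rewrite eq_sym oner_eq0.
have -> : supp (apply_op A psi) = (q : bits n -> bits n) @^-1: supp psi.
  by apply/setP => x; rewrite !inE E mulf_eq0 negb_or phnz.
by rewrite card_preimset //; exact: perm_inj.
Qed.

Definition set_bit (t : 'I_n) (x : bits n) : bits n :=
  [ffun i => if i == t then true else x i].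

Lemma clear_clear (t : 'I_n) (x : bits n) : clear_bit t (clear_bit t x) = clear_bit t x.
Proof. apply/ffunP => i; rewrite /clear_bit /set_bit !ffunE; by case: (i == t). Qed.
Lemma clear_set (t : 'I_n) (x : bits n) : clear_bit t (set_bit t x) = clear_bit t x.
Proof. apply/ffunP => i; rewrite /clear_bit /set_bit !ffunE; by case: (i == t). Qed.
Lemma set_clear (t : 'I_n) (x : bits n) : set_bit t (clear_bit t x) = set_bit t x.
Proof. apply/ffunP => i; rewrite /clear_bit /set_bit !ffunE; by case: (i == t). Qed.
Lemma set_set (t : 'I_n) (x : bits n) : set_bit t (set_bit t x) = set_bit t x.
Proof. apply/ffunP => i; rewrite /clear_bit /set_bit !ffunE; by case: (i == t). Qed.

Lemma pair_cases (t : 'I_n) (x y : bits n) : clear_bit t x = clear_bit t y ->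
  x = clear_bit t y \/ x = set_bit t y.
Proof.
move=> E; have Hi i : i != t -> x i = y i.
  by move=> ne; move/ffunP: E => /(_ i); rewrite !ffunE (negbTE ne).
case Ht: (x t); [right|left]; apply/ffunP => i; rewrite !ffunE;
  (case: (eqVneq i t) => [->|ne]; [by rewrite Ht | exact: Hi]).
Qed.

Arguments pair_cases {t x y}.

Lemma mem_pair (t : 'I_n) (T : {set bits n}) (x z : bits n) : z \in T -> clear_bit t x = clear_bit t z ->
  x \in clear_bit t @: T :|: set_bit t @: T.
Proof.
move=> zT E; rewrite inE; apply/orP.
by case: (pair_cases E) => ->; [left|right]; apply: imset_f.
Qed.

Arguments mem_pair {t T x z}.

Lemma card_pair (t : 'I_n) (T : {set bits n}) :
  (#|clear_bit t @: T :|: set_bit t @: T| <= 2 * #|T|)%N.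
Proof.
rewrite cardsU mul2n -addnn; apply: leq_trans (leq_subr _ _) _.
by apply: leq_add; exact: leq_imset_card.
Qed.

Lemma gch_sum (t : 'I_n) (S : {set bits n}) (f : state R n) x :
  \sum_y gch_op R t S x y * f y =
  gch_op R t S x (clear_bit t x) * f (clear_bit t x) +
  gch_op R t S x (set_bit t x) * f (set_bit t x).
Proof.
have ne : set_bit t x != clear_bit t x.
  by apply/eqP => /ffunP /(_ t); rewrite !ffunE eqxx.
rewrite (bigD1 (clear_bit t x)) //= (bigD1 (set_bit t x)) /=; last by rewrite ne.
rewrite big1 ?addr0 ?addrA // => y /andP [Hy1 Hy2].
rewrite /gch_op; case: eqP => [E|]; last by rewrite mul0r.
by case: (pair_cases (esym E)) => Ey; [move: Hy1 | move: Hy2]; rewrite Ey eqxx.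
Qed.

Lemma gch_upper (A : operator R n) psi : gen_controlled_hadamard A ->
  (#|supp (apply_op A psi)| <= 2 * #|supp psi|)%N.
Proof.
case=> t [S HA].
have E x : apply_op A psi x = gch_op R t S x (clear_bit t x) * psi (clear_bit t x) +
  gch_op R t S x (set_bit t x) * psi (set_bit t x).
  by rewrite /apply_op -gch_sum; apply: eq_bigr => y _; rewrite HA.
apply: leq_trans (card_pair t (supp psi)).
apply: subset_leq_card; apply/subsetP => x; rewrite inE E => nz.
have [h0|h1] : psi (clear_bit t x) != 0 \/ psi (set_bit t x) != 0.
  case: (eqVneq (psi (clear_bit t x)) 0) => [h0|h0]; last by left.
  right; apply: contra nz => /eqP h1; by rewrite h0 h1 !mulr0 addr0.
- by apply: (mem_pair (z := clear_bit t x)); rewrite ?inE ?clear_clear.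
- by apply: (mem_pair (z := set_bit t x)); rewrite ?inE ?clear_set.
Qed.

Lemma gch_lower (A : operator R n) psi : gen_controlled_hadamard A ->
  (#|supp psi| <= 2 * #|supp (apply_op A psi)|)%N.
Proof.
case=> t [S HA].
have E x : apply_op A psi x = gch_op R t S x (clear_bit t x) * psi (clear_bit t x) +
  gch_op R t S x (set_bit t x) * psi (set_bit t x).
  by rewrite /apply_op -gch_sum; apply: eq_bigr => y _; rewrite HA.
apply: leq_trans (card_pair t _).
apply: subset_leq_card; apply/subsetP => y; rewrite inE => nz.
set x0 := clear_bit t y; set x1 := set_bit t y.
have [h0|h1] : apply_op A psi x0 != 0 \/ apply_op A psi x1 != 0.
  case: (eqVneq (apply_op A psi x0) 0) => [h0|h0]; last by left.
  right; apply/eqP => h1; move: nz; apply/negP; rewrite negbK.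
  have t0 : x0 t = false by rewrite /x0 ffunE eqxx.
  have t1 : x1 t = true by rewrite /x1 ffunE eqxx.
  move: h0 h1; rewrite !E /x0 /x1 clear_clear set_clear clear_set set_set.
  rewrite /gch_op -/x0 -/x1 clear_clear clear_set eqxx t0 t1 /=.
  set a := psi x0; set b := psi x1.
  move=> e1 e2.
  have [ea eb] : a = 0 /\ b = 0.
    move: e1 e2; case: (clear_bit t y \in S) => /=.
    + rewrite /hadamard /= => e1 e2.
      set u := 1 / sqrtC 2 in e1 e2.
      have unz : u != 0 by rewrite mulf_eq0 negb_or oner_eq0 invr_eq0 sqrtC_eq0 pnatr_eq0.
      have e2' : u * (a - b) = 0.
        have E2 : -1 / sqrtC 2 = - u :> R[i] by rewrite /u mulNr.
        rewrite E2 in e2. by rewrite mulrBr -e2 mulNr.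
      move/eqP: e2'; rewrite mulf_eq0 (negbTE unz) /= subr_eq0 => /eqP eab.
      move/eqP: e1; rewrite -mulrDr mulf_eq0 (negbTE unz) /= eab -mulr2n mulrn_eq0 /= => /eqP ->.
      by split.
    + by rewrite !mul1r !mul0r addr0 add0r => -> ->.
  by case: (pair_cases (erefl (clear_bit t y))) => Ey; rewrite {1}Ey; [rewrite -/x0 -/a ea | rewrite -/x1 -/b eb].
- by apply: (mem_pair (z := x0)); rewrite ?inE ?clear_clear.
- by apply: (mem_pair (z := x1)); rewrite ?inE ?clear_set.
Qed.

End Aux.
Arguments supp {R n}.

Theorem lemma2 (R : realType) (n k : nat) (U V : nat -> operator R n)
  (hU : forall i, (i <= k)%N -> incoherent (U i))
  (hV : forall i, (1 <= i <= k)%N -> gen_controlled_hadamard (V i))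
  (psi : state R n) (hpsi : normalized psi) :
  (coherence_rank psi)%:R / 2 ^+ k <= (coherence_rank (circuit U V k psi))%:R :> R /\
  (coherence_rank (circuit U V k psi))%:R <= 2 ^+ k * (coherence_rank psi)%:R :> R.
Proof.
have main : forall j, (j <= k)%N ->
  (#|supp psi| <= 2 ^ j * #|supp (circuit U V j psi)|)%N /\
  (#|supp (circuit U V j psi)| <= 2 ^ j * #|supp psi|)%N.
  elim=> [|j IH] hj.
    by rewrite /= (incoh_supp _ _ _ _ (hU _ (leq0n k))); split; rewrite ?expn0 ?mul1n ?leqnn.
  have [IH1 IH2] := IH (ltnW hj).
  rewrite /= (incoh_supp _ _ _ _ (hU _ hj)).
  have hVj : gen_controlled_hadamard (V j.+1) by apply: hV; rewrite hj.
  have L := gch_lower _ _ _ (circuit U V j psi) hVj.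
  have G := gch_upper _ _ _ (circuit U V j psi) hVj.
  rewrite expnS; split.
    apply: leq_trans IH1 _.
    by rewrite (mulnC 2) -mulnA leq_pmul2l ?expn_gt0.
  by apply: leq_trans G _; rewrite -mulnA leq_pmul2l.
have [M1 M2] := main k (leqnn k).
rewrite !supp_rank; split.
  rewrite ler_pdivrMr ?exprn_gt0 // -natrX -natrM ler_nat mulnC //.
rewrite -natrX -natrM ler_nat //.
Qed.
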